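(* Let $N\ge 1$ be an integer, let $\Gamma$ be the principled parametric grammar $\Gamma^{(N)}$ defined below, and let $w$ be the string defined below. If $P,Q$ are positive integers with $P\le Q$ and $PQ=N$, then $w\in L(\Gamma_{s_P})$.
   Context: Let $a=\lceil\log_2\sqrt N\rceil$ and $b=\lceil\log_2 N\rceil$. The grammar $\Gamma^{(N)}$ has nonterminals $\mathtt S$, $A_0,\dots,A_a$, $B_0,\dots,B_a$, $C_0,\dots,C_{b+1}$, $Z_0,\dots,Z_b$, terminals $c_0,\dots,c_b$, and start symbol $\mathtt S$. Its rules are string-rewriting productions $\alpha\to\beta$ (possibly with more than one symbol on the left). Fixed rules (present for every parameter setting): $\mathtt S\to A_a\mathtt S$; $\mathtt S\to\varepsilon$; $B_j\to B_{j-1}B_{j-1}$ for $1\le j\le a$; $B_0\to C_0$; and for each $k\in\{0,\dots,b\}$: $C_kC_k\to C_kZ_k$, $C_kZ_k\to C_{k+1}Z_k$, $C_{k+1}Z_k\to C_{k+1}$, and $C_k\to c_k$. Parametric groups (exactly one alternative is chosen from each): $(A_0\to B_0,\ A_0\to\varepsilon)$, and for each $j\in\{1,\dots,a\}$, $(A_j\to A_{j-1},\ A_j\to B_jA_{j-1})$. A parameter setting $s$ is a choice of one alternative from each parametric group; $\Gamma_s$ is the grammar whose rules are the fixed rules together with the chosen alternatives, and $L(\Gamma_s)$ is the set of terminal strings derivable from $\mathtt S$. To $s$ associate bits $p_0,\dots,p_a$: $p_0=1$ iff $A_0\to B_0$ is chosen, and for $j\ge1$, $p_j=1$ iff $A_j\to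 B_jA_{j-1}$ is chosen; put $P_s=\sum_{j=0}^a p_j2^j$. Conversely, for an integer $0\le P<2^{a+1}$, $s_P$ is the setting whose bits are the binary digits of $P$. The string $w$ is $c_{i_1}c_{i_2}\cdots c_{i_r}$, where $i_1<\dots<i_r$ are the positions (counting from $0$ at the least significant digit) of the digits equal to $1$ in the binary representation of $N$. *)

(* Defs.v *)
From mathcomp Require Import all_boot.
Set Implicit Arguments. Unset Strict Implicit. Unset Printing Implicit Defensive.

(* Symbols of the grammar Gamma^(N): start symbol S, nonterminals A_j, B_j,
   C_k, Z_k and terminals c_k (written T k). *)
Inductive sym : Type :=
  | S : sym
  | A : nat -> sym
  | B : nat -> sym
  | C : nat -> sym
  | Z : nat -> sym
  | T : nat -> sym.

(* a = ceil(log2 sqrt N) = least a with N <= 4^a ;  b = ceil(log2 N). *)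
Definition par_a (N : nat) : nat := up_log 4 N.
Definition par_b (N : nat) : nat := up_log 2 N.

(* A parameter setting is given by its bits p_0, ..., p_a:
   p_0 = true iff A_0 -> B_0 is chosen (else A_0 -> eps);
   p_j = true iff A_j -> B_j A_{j-1} is chosen (else A_j -> A_{j-1}), j >= 1. *)
Definition setting := nat -> bool.

Definition sP (P : nat) : setting := fun j => odd (P %/ 2 ^ j).

Inductive rule (N : nat) (p : setting) : seq sym -> seq sym -> Prop :=
  | r_S1 : rule N p [:: S] [:: A (par_a N); S]
  | r_S2 : rule N p [:: S] [::]
  | r_B j : 1 <= j <= par_a N -> rule N p [:: B j] [:: B j.-1; B j.-1]
  | r_B0 : rule N p [:: B 0] [:: C 0]
  | r_CC k : k <= par_b N -> rule N p [:: C k; C k] [:: C k; Z k]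
  | r_CZ k : k <= par_b N -> rule N p [:: C k; Z k] [:: C k.+1; Z k]
  | r_CZ' k : k <= par_b N -> rule N p [:: C k.+1; Z k] [:: C k.+1]
  | r_Ct k : k <= par_b N -> rule N p [:: C k] [:: T k]
  | r_A0on : p 0 -> rule N p [:: A 0] [:: B 0]
  | r_A0off : ~~ p 0 -> rule N p [:: A 0] [::]
  | r_Aon j : 1 <= j <= par_a N -> p j -> rule N p [:: A j] [:: B j; A j.-1]
  | r_Aoff j : 1 <= j <= par_a N -> ~~ p j -> rule N p [:: A j] [:: A j.-1].

Definition step (N : nat) (p : setting) (x y : seq sym) : Prop :=
  exists u v l r, rule N p l r /\ x = u ++ l ++ v /\ y = u ++ r ++ v.

Inductive derives (N : nat) (p : setting) : seq sym -> seq sym -> Prop :=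
  | der_refl x : derives N p x x
  | der_step x y z : step N p x y -> derives N p y z -> derives N p x z.

Definition is_terminal (N : nat) (s : sym) : bool :=
  if s is T k then k <= par_b N else false.

Definition in_lang (N : nat) (p : setting) (x : seq sym) : Prop :=
  derives N p [:: S] x /\ all (is_terminal N) x.

(* w = c_{i_1} ... c_{i_r}, i_1 < ... < i_r the positions of the 1-bits of N
   (N < 2^(b+1), so positions 0..b suffice). *)
Definition word (N : nat) : seq sym :=
  [seq T i | i <- iota 0 (par_b N).+1 & odd (N %/ 2 ^ i)].

(* Main.v *)
Require Import Defs.
From mathcomp Require Import all_boot.
From mathcomp Require Import zify.

Section G.
Variables (N : nat) (p : setting).

Lemma derives_trans x y z : derives N p x y -> derives N p y z -> derives N p x z.
Proof. elim=> [//|x0 y0 z0 H _ IH] Hz; apply: der_step H (IH Hz). Qed.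

Lemma derives_ctx u v x y : derives N p x y -> derives N p (u ++ x ++ v) (u ++ y ++ v).
Proof.
elim=> [x0|x0 y0 z0 [u0 [v0 [l [r [Hr [-> ->]]]]]] _ IH]; first exact: der_refl.
apply: der_step IH; exists (u ++ u0), (v0 ++ v), l, r; split=> //.
by rewrite -!catA.
Qed.

Lemma derives_cat x x' y y' : derives N p x x' -> derives N p y y' ->
  derives N p (x ++ y) (x' ++ y').
Proof.
move=> H1 H2; apply: (@derives_trans (x ++ y) (x' ++ y)).
  by have := @derives_ctx [::] y x x' H1.
by have := @derives_ctx x' [::] y y' H2; rewrite !cats0.
Qed.

Lemma rule_der l r : rule N p l r -> derives N p l r.
Proof.
move=> H; apply: der_step (der_refl _ _ _); exists [::], [::], l, r.
by rewrite !cats0.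
Qed.
End G.
Arguments derives_trans {N p x} y {z}.
Arguments derives_cat {N p x x' y y'}.
Arguments derives_ctx {N p} u v {x y}.
Arguments rule_der {N p l r}.

Lemma B_der N p j : j <= par_a N -> derives N p [:: B j] (nseq (2 ^ j) (C 0)).
Proof.
elim: j => [_|j IH Hj]; first exact/rule_der/r_B0.
apply: derives_trans (rule_der (r_B (j:=j.+1) _ _)) _; first by rewrite Hj.
rewrite expnS mul2n -addnn nseqD /=.
by apply: (derives_cat (x := [:: B j]) (y := [:: B j])); apply: IH; lia.
Qed.

Lemma mod_split P d : P %% (2 * d) = (odd (P %/ d)) * d + P %% d.
Proof.
case: (posnP d) => [->|dp]; first by rewrite muln0 !modn0 muln0.
have h1 : (P %/ d) %% 2 = (P %% (2 * d)) %/ d by rewrite modn_divl.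
have h2 : (P %% (2 * d)) %% d = P %% d.
  by rewrite modn_dvdm // dvdn_mull.
rewrite modn2 in h1.
by rewrite {1}(divn_eq (P %% (2 * d)) d) -h1 h2.
Qed.

Lemma A_der N P j : j <= par_a N ->
  derives N (sP P) [:: A j] (nseq (P %% 2 ^ j.+1) (C 0)).
Proof.
elim: j => [_|j IH Hj].
  rewrite modn2; case Ho: (odd P).
    apply: derives_trans (rule_der (r_A0on _ _)) (rule_der (r_B0 _ _)).
    by rewrite /sP divn1 Ho.
  by apply: rule_der; apply: r_A0off; rewrite /sP divn1 Ho.
have Hj' : 1 <= j.+1 <= par_a N by rewrite Hj.
rewrite expnS mod_split.
case Ho: (odd (P %/ 2 ^ j.+1)) => /=.
  apply: derives_trans (rule_der (r_Aon Hj' _)) _; first by rewrite /sP Ho.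
  rewrite mul1n nseqD /=.
  apply: (derives_cat (x := [:: B j.+1]) (y := [:: A j])).
    exact: B_der.
  apply: IH; lia.
apply: derives_trans (rule_der (r_Aoff Hj' _)) _; first by rewrite /sP Ho.
by rewrite mul0n add0n /=; apply: IH; lia.
Qed.

Lemma S_der N P n : P < 2 ^ (par_a N).+1 ->
  derives N (sP P) [:: S] (nseq (n * P) (C 0)).
Proof.
move=> HP; elim: n => [|n IH]; first exact/rule_der/r_S2.
apply: derives_trans (rule_der (r_S1 _ _)) _.
rewrite mulSn nseqD.
apply: (derives_cat (x := [:: A (par_a N)]) (y := [:: S])) => //.
by have := @A_der N P (par_a N) (leqnn _); rewrite modn_small.
Qed.

Lemma pair_der N p k n : k <= par_b N ->
  derives N p (nseq (n.*2) (C k)) (nseq n (C k.+1)).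
Proof.
move=> Hk; elim: n => [|n IH]; first exact: der_refl.
rewrite doubleS /=.
apply: (derives_cat (x := [:: C k; C k]) (x' := [:: C k.+1])) => //.
apply: derives_trans (rule_der (r_CC _ Hk)) _.
apply: derives_trans (rule_der (r_CZ _ Hk)) _.
exact: rule_der (r_CZ' _ Hk).
Qed.

Lemma bin_der N p n : forall k m, m < 2 ^ n -> k + n <= (par_b N).+1 ->
  derives N p (nseq m (C k)) [seq T (k + i) | i <- iota 0 n & odd (m %/ 2 ^ i)].
Proof.
elim: n => [|n IH] k m Hm Hk.
  by move: Hm; rewrite expn0 ltnS leqn0 => /eqP ->; exact: der_refl.
have Hkb : k <= par_b N by lia.
rewrite {1}(divn_eq m 2) modn2 muln2 addnC nseqD.
rewrite /= expn0 divn1.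
have -> : forall (b : bool) (s : seq nat), [seq T (k + i) | i <- if b then 0 :: s else s] = (if b then [:: T k] else [::]) ++ [seq T (k + i) | i <- s] by case=> // s; rewrite /= addn0.
apply: derives_cat.
  case: (odd m) => /=; last exact: der_refl.
  by apply/rule_der/r_Ct.
apply: derives_trans (@pair_der N p k (m %/ 2) Hkb) _.
have -> : iota 1 n = [seq 1 + i | i <- iota 0 n] by rewrite -iotaDl.
rewrite filter_map -map_comp.
have := IH k.+1 (m %/ 2) _ _.
have E : [seq (T \o (fun i : nat => k + i)) (1 + i)
         | i <- iota 0 n & preim (fun i : nat => 1 + i) (fun i => odd (m %/ 2 ^ i)) i]
       = [seq T (k.+1 + i) | i <- iota 0 n & odd (m %/ 2 %/ 2 ^ i)].
  rewrite (eq_filter (a2 := fun i => odd (m %/ 2 %/ 2 ^ i))); last first.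
    by move=> i /=; rewrite add1n expnS divnMA.
  by apply: eq_map => i /=; rewrite addnA addn1.
rewrite E; apply.
  by rewrite ltn_divLR // -expnSr.
lia.
Qed.

Theorem mainTheorem5 (N P Q : nat) :
  1 <= N -> 0 < P -> 0 < Q -> P <= Q -> P * Q = N ->
  in_lang N (sP P) (word N).
Proof.
move=> HN HP HQ HPQ HN'.
have Ha : N <= 4 ^ par_a N by apply: up_logP.
have Hb : N <= 2 ^ par_b N by apply: up_logP.
have HP2 : P <= 2 ^ par_a N.
  rewrite leqNgt; apply/negP => H.
  have : 2 ^ par_a N * 2 ^ par_a N < P * P by apply: ltn_mul.
  have E4 : 4 ^ par_a N = 2 ^ par_a N * 2 ^ par_a N by rewrite -expnMn.
  rewrite E4 in Ha; move: H Ha E4; set x := 2 ^ par_a N => H Ha _ Hx.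
  have : P * P <= P * Q by rewrite leq_mul2l HPQ orbT.
  lia.
split.
  apply: derives_trans (@S_der N P Q _) _.
    by rewrite expnS; lia.
  rewrite mulnC HN' /word.
  have := @bin_der N (sP P) (par_b N).+1 0 N _ _.
  rewrite (eq_map (f := fun i => T (0 + i)) (g := T)) //; apply => //.
  by rewrite expnS; lia.
rewrite /word all_map; apply/allP => i; rewrite mem_filter mem_iota => /andP [_ Hi].
by rewrite /= /is_terminal -ltnS; rewrite add0n in Hi.
Qed.
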